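(* Let $G$ be a unit disk graph, let $\mathrm{IS}(G)$ be the independent set produced by Heuristic IS on $G$, and let $\mathrm{OPT}(G)$ be a maximum independent set of $G$. Then $|\mathrm{IS}(G)| \geq |\mathrm{OPT}(G)|/3$.
   Context: A graph $G$ is a unit disk graph if its vertices can be put in one-to-one correspondence with closed disks of radius $1$ in the plane so that two vertices are adjacent if and only if the corresponding disks intersect (tangent disks are considered to intersect). Every unit disk graph $H$ has a vertex $v$ such that every independent set in the subgraph of $H$ induced on the neighborhood $N(v)$ has at most $3$ vertices. Heuristic IS: starting with the empty set and the graph $G$, repeat until the current graph is empty: in the current graph $H$ (an induced subgraph of $G$), choose a vertex $v$ such that the subgraph of $H$ induced on $N_H(v)$ has no independent set of size more than $3$; add $v$ to the independent set; delete $v$ and all its neighbors in $H$ from $H$. *)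

(* Defs.v *)
From HB Require Import structures.
From mathcomp Require Import all_boot all_order all_algebra.
From mathcomp Require Import reals.
Set Implicit Arguments. Unset Strict Implicit. Unset Printing Implicit Defensive.
Import Order.TTheory GRing.Theory Num.Theory.
Local Open Scope ring_scope.

Definition simple_graph (T : finType) (e : rel T) : Prop :=
  symmetric e /\ irreflexive e.

(* Unit disk graph: vertices correspond one-to-one (injective centre map p)
   to closed disks of radius 1; two such disks intersect (tangency included)
   iff their centres are at Euclidean distance <= 2, i.e. squared
   distance <= 4. *)
Definition unit_disk_graph (R : realType) (T : finType) (e : rel T) : Prop :=
  exists p : T -> R * R, injective p /\
    forall u v : T, u != v ->
      (e u v <-> ((p u).1 - (p v).1) ^+ 2 + ((p u).2 - (p v).2) ^+ 2 <= 4).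

Definition independent (T : finType) (e : rel T) (S : {set T}) : Prop :=
  forall u v, u \in S -> v \in S -> ~~ e u v.

Definition maximum_independent (T : finType) (e : rel T) (S : {set T}) : Prop :=
  independent e S /\ forall S' : {set T}, independent e S' -> (#|S'| <= #|S|)%N.

Definition nbhd_in (T : finType) (e : rel T) (H : {set T}) (v : T) : {set T} :=
  [set u in H | e v u].

(* heuristic_IS e H I : I is a possible output of Heuristic IS started
   with the empty set on the induced subgraph G[H] (all choices allowed). *)
Inductive heuristic_IS (T : finType) (e : rel T) : {set T} -> {set T} -> Prop :=
| hIS_done : heuristic_IS e set0 set0
| hIS_step : forall (H I : {set T}) (v : T),
    v \in H ->
    (forall S : {set T}, S \subset nbhd_in e H v -> independent e S -> #|S| <= 3)%N ->
    heuristic_IS e (H :\: (v |: nbhd_in e H v)) I ->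
    heuristic_IS e H (v |: I).

(* Main.v *)
Require Import Defs.
From HB Require Import structures.
From mathcomp Require Import all_boot all_order all_algebra.
From mathcomp Require Import reals.
Import Order.TTheory GRing.Theory Num.Theory.
Local Open Scope ring_scope.

Lemma hIS_sub (T : finType) (e : rel T) H I : heuristic_IS e H I -> I \subset H.
Proof.
elim=> [|H' I' v vH _ _ IH]; first by rewrite sub0set.
rewrite subUset sub1set vH /=.
apply: (subset_trans IH); exact: subsetDl.
Qed.

Lemma hIS_bound (T : finType) (e : rel T) H I : heuristic_IS e H I ->
  forall S : {set T}, S \subset H -> independent e S -> (#|S| <= 3 * #|I|)%N.
Proof.
elim=> [|H' I' v vH hN hI IH] S sS iS.
  by move: sS; rewrite subset0 => /eqP ->; rewrite cards0.
set N := nbhd_in e H' v.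
have vI : v \notin I'.
  apply/negP => /(subsetP (@hIS_sub _ _ _ _ hI)); by rewrite !inE eqxx.
rewrite cardsU1 vI /= mulnDr muln1.
rewrite -(cardsID (v |: N) S) .
apply: leq_add; last first.
  apply: IH; last by move=> x y /setDP [xS _] /setDP [yS _]; apply: iS.
  apply/subsetP => x /setDP [xS xn]; apply/setDP; split => //.
  exact: (subsetP sS).
case: (boolP (v \in S)) => vS.
  have -> : S :&: (v |: N) = [set v].
    apply/setP => x; rewrite !inE.
    case: (eqVneq x v) => [->|xv]; first by rewrite vS.
    rewrite /=.
    apply/negP => /and3P [xS _ evx].
    by move: (iS v x vS xS); rewrite evx.
  by rewrite cards1.
apply: hN; last by move=> x y /setIP [xS _] /setIP [yS _]; apply: iS.
apply/subsetP => x /setIP [xS]; rewrite !inE => /orP [/eqP xv|//].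
by move: xS; rewrite xv (negPf vS).
Qed.

Theorem theorem4p7 (R : realType) (T : finType) (e : rel T)
  (hG : simple_graph e) (hUDG : unit_disk_graph R e)
  (IS OPT : {set T}) (hIS : heuristic_IS e [set: T] IS)
  (hOPT : maximum_independent e OPT) :
  (#|OPT|%:R / 3 : R) <= #|IS|%:R.
Proof.
have h := @hIS_bound _ _ _ _ hIS OPT (subsetT OPT) hOPT.1.
rewrite ler_pdivrMr // -natrM ler_nat mulnC.
exact: h.
Qed.
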